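(* For the symmetric walk, for the weakly asymmetric walk with any fixed $c>0$, and for the asymmetric walk with any fixed $q<p$, the following holds. If $X_0$ is chosen uniformly at random from $\mathcal T_N$, independently of the steps, then $R_N/N$ converges in distribution to the uniform distribution on $[0,1]$ as $N\to\infty$.
   Context: Fix $N\ge2$ and let $\mathcal T_N=\{0,1,\dots,N\}$. Let $(X_n)_{n\ge0}$ be a nearest-neighbour random walk on $\mathcal T_N$. At each step it moves from $x$ to $x+1$ with probability $p_N$ and to $x-1$ with probability $q_N=1-p_N$, independently of the past, and it is stopped the first time it is at $0$ or $N$. (If it starts at $0$ or $N$ it is stopped immediately; this has vanishing probability and does not affect the limit.) The walk is called: - symmetric if $p_N=q_N=1/2$; - weakly asymmetric (with parameter $c>0$ fixed) if $q_N=1/2-c/N$ and $p_N=1/2+c/N$, for $N$ large; - asymmetric if $p_N=p$ and $q_N=q$ are fixed with $p+q=1$ and $q<p$. For $a\in\mathcal T_N$ let $T_a=\inf\{n\ge1:X_n=a\}$ and $\tau_N=T_0\wedge T_N$. Let $G(y)=\sum_{k=0}^{\tau_N}\mathbf 1\{X_k=y\}$, and let the range be $R_N=\#\{y\in\mathcal T_N:G(y)\ge1\}$. *)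

(* Defs.v *)
From Stdlib Require Import Reals List ZArith.
Import ListNotations.
Open Scope R_scope.

(* All step sequences of length n (true = step +1, false = step -1). *)
Fixpoint bool_lists (n : nat) : list (list bool) :=
  match n with
  | O => [[]]
  | S n' => flat_map (fun s => [true :: s; false :: s]) (bool_lists n')
  end.

Fixpoint positions (x : Z) (s : list bool) : list Z :=
  x :: match s with
       | nil => nil
       | b :: s' => positions (if b then (x + 1)%Z else (x - 1)%Z) s'
       end.

Definition interiorb (N : nat) (y : Z) : bool :=
  (0 <? y)%Z && (y <? Z.of_nat N)%Z.

Definition boundaryb (N : nat) (y : Z) : bool :=
  (y =? 0)%Z || (y =? Z.of_nat N)%Z.

(* s is a stopped path from x: the walk is in {1..N-1} at all times before the
   last one and at 0 or N at the last time (time tau_N = length s).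
   A start at 0 or N gives the empty path (stopped immediately). *)
Definition stoppedb (N : nat) (x : Z) (s : list bool) : bool :=
  let ps : list Z := positions x s in
  boundaryb N (last ps x) && forallb (interiorb N) (removelast ps).

Definition path_weight (pN : R) (s : list bool) : R :=
  fold_right (fun (b : bool) (acc : R) => (if b then pN else 1 - pN) * acc) 1 s.

Definition visits (y : Z) (ps : list Z) : bool := existsb (Z.eqb y) ps.

Definition range (N : nat) (x : Z) (s : list bool) : nat :=
  length (filter (fun y => visits (Z.of_nat y) (positions x s)) (seq 0 (N + 1))).

Definition rsum (l : list R) : R := fold_right Rplus 0 l.

(* Contribution of paths stopped at exactly time n to
   P(R_N / N <= t), with X_0 uniform on {0..N}. *)
Definition cdf_term (p : nat -> R) (N : nat) (t : R) (n : nat) : R :=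
  rsum (map (fun x : nat =>
    / INR (N + 1) *
    rsum (map (fun s =>
      (if stoppedb N (Z.of_nat x) s then path_weight (p N) s else 0) *
      (if Rle_dec (INR (range N (Z.of_nat x) s) / INR N) t then 1 else 0))
      (bool_lists n)))
    (seq 0 (N + 1))).

Definition uniform_cdf (t : R) : R := Rmax 0 (Rmin t 1).

Definition symmetric_regime (p : nat -> R) : Prop :=
  forall N, p N = / 2.

Definition weakly_asymmetric_regime (p : nat -> R) : Prop :=
  exists c : R, 0 < c /\
    exists N0 : nat, forall N : nat, (N0 <= N)%nat -> p N = / 2 + c / INR N.

Definition asymmetric_regime (p : nat -> R) : Prop :=
  exists p0 : R, / 2 < p0 <= 1 /\ forall N, p N = p0.

(* Main.v *)
Require Import Defs.
From Stdlib Require Import Reals List ZArith Lra Lia Psatz Bool Btauto.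
Import ListNotations.
Open Scope R_scope.

Definition stepZ (c : bool) (x : Z) : Z := if c then (x + 1)%Z else (x - 1)%Z.

Fixpoint stopR (a b x : Z) (s : list bool) : bool :=
  match s with
  | nil => (x =? a)%Z || (x =? b)%Z
  | c :: s' => (a <? x)%Z && (x <? b)%Z && stopR a b (stepZ c x) s'
  end.

Fixpoint endR (x : Z) (s : list bool) : Z :=
  match s with nil => x | c :: s' => endR (stepZ c x) s' end.

Fixpoint aliveR (a b x : Z) (s : list bool) : bool :=
  (a <? x)%Z && (x <? b)%Z &&
  match s with nil => true | c :: s' => aliveR a b (stepZ c x) s' end.

Lemma positions_cons x c s : positions x (c :: s) = x :: positions (stepZ c x) s.
Proof. reflexivity. Qed.

Lemma positions_nil x : positions x [] = [x].
Proof. reflexivity. Qed.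

Lemma positions_hd x s : exists r, positions x s = x :: r.
Proof. destruct s; simpl; eauto. Qed.

Lemma last_def (a : Z) l d d' : last (a :: l) d = last (a :: l) d'.
Proof. revert a; induction l as [|b l IH]; intros a; [reflexivity|].
  change (last (b :: l) d = last (b :: l) d'). apply IH. Qed.

Lemma stoppedb_stopR N x s : stoppedb N x s = stopR 0 (Z.of_nat N) x s.
Proof.
  revert x; induction s as [|c s IH]; intros x.
  - unfold stoppedb, boundaryb; simpl. now rewrite andb_true_r.
  - cbn [stopR]. rewrite <- (IH (stepZ c x)). unfold stoppedb. rewrite positions_cons.
    destruct (positions_hd (stepZ c x) s) as [r Hr]. rewrite Hr.
    change (last (x :: stepZ c x :: r) x) with (last (stepZ c x :: r) x).
    change (removelast (x :: stepZ c x :: r)) with (x :: removelast (stepZ c x :: r)).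
    simpl forallb. rewrite (last_def _ _ x (stepZ c x)).
    unfold interiorb at 1.
    destruct ((0 <? x)%Z && (x <? Z.of_nat N)%Z); simpl; btauto.
Qed.

Open Scope Z_scope.

Ltac bdes := repeat match goal with
  | H : (_ && _)%bool = true |- _ => apply andb_true_iff in H; destruct H
  | H : (_ || _)%bool = true |- _ => apply orb_true_iff in H; destruct H
  | H : (_ <? _) = true |- _ => apply Z.ltb_lt in H
  | H : (_ =? _) = true |- _ => apply Z.eqb_eq in H
  end.

Lemma stopR_bounds a b x s : a <= b -> stopR a b x s = true ->
  forall z, In z (positions x s) -> a <= z <= b.
Proof.
  revert x; induction s as [|c s IH]; intros x Hab H z Hz; simpl in H; bdes.
  - simpl in Hz; destruct Hz as [->|[]]; lia.
  - simpl in Hz; destruct Hz as [->|[]]; lia.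
  - rewrite positions_cons in Hz. destruct Hz as [->|Hz]; [lia|]. eauto.
Qed.

Lemma stopR_end a b x s : stopR a b x s = true -> endR x s = a \/ endR x s = b.
Proof.
  revert x; induction s as [|c s IH]; intros x H; simpl in H; bdes; simpl; auto.
Qed.

Lemma end_in x s : In (endR x s) (positions x s).
Proof.
  revert x; induction s as [|c s IH]; intros x; simpl; auto.
Qed.

Lemma stopR_top a b x s : a < b -> stopR a b x s = true -> endR x s = b ->
  forall z, In z (positions x s) -> a < z <= b.
Proof.
  revert x; induction s as [|c s IH]; intros x Hab H He z Hz; simpl in H, He; bdes.
  - simpl in Hz; destruct Hz as [->|[]]; lia.
  - simpl in Hz; destruct Hz as [->|[]]; lia.
  - rewrite positions_cons in Hz. destruct Hz as [->|Hz]; [lia|]. eauto.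
Qed.

Lemma stopR_bot a b x s : a < b -> stopR a b x s = true -> endR x s = a ->
  forall z, In z (positions x s) -> a <= z < b.
Proof.
  revert x; induction s as [|c s IH]; intros x Hab H He z Hz; simpl in H, He; bdes.
  - simpl in Hz; destruct Hz as [->|[]]; lia.
  - simpl in Hz; destruct Hz as [->|[]]; lia.
  - rewrite positions_cons in Hz. destruct Hz as [->|Hz]; [lia|]. eauto.
Qed.

Lemma widen_top a a' b x s : stopR a b x s = true -> endR x s = b -> a' <= a ->
  stopR a' b x s = true.
Proof.
  revert x; induction s as [|c s IH]; intros x H He Ha; simpl in H, He |- *; bdes.
  - subst; rewrite Z.eqb_refl; btauto.
  - subst; rewrite Z.eqb_refl; btauto.
  - rewrite IH; auto. apply andb_true_iff; split; [apply andb_true_iff; split|]; auto; apply Z.ltb_lt; lia.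
Qed.

Lemma widen_bot a b b' x s : stopR a b x s = true -> endR x s = a -> b <= b' ->
  stopR a b' x s = true.
Proof.
  revert x; induction s as [|c s IH]; intros x H He Ha; simpl in H, He |- *; bdes.
  - subst; rewrite Z.eqb_refl; btauto.
  - subst; rewrite Z.eqb_refl; btauto.
  - rewrite IH; auto. apply andb_true_iff; split; [apply andb_true_iff; split|]; auto; apply Z.ltb_lt; lia.
Qed.

Lemma narrow_top a a' b x s : stopR a' b x s = true -> endR x s = b ->
  (forall z, In z (positions x s) -> a < z) -> stopR a b x s = true.
Proof.
  revert x; induction s as [|c s IH]; intros x H He Ha; simpl in H, He |- *; bdes.
  - subst; rewrite (Z.eqb_refl); btauto.
  - subst; rewrite (Z.eqb_refl); btauto.
  - rewrite positions_cons in Ha. rewrite IH; auto.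
    + apply andb_true_iff; split; [apply andb_true_iff; split|]; auto; apply Z.ltb_lt; auto.
      apply Ha; left; auto.
    + intros z Hz; apply Ha; right; auto.
Qed.

Lemma narrow_bot a b b' x s : stopR a b' x s = true -> endR x s = a ->
  (forall z, In z (positions x s) -> z < b) -> stopR a b x s = true.
Proof.
  revert x; induction s as [|c s IH]; intros x H He Ha; simpl in H, He |- *; bdes.
  - subst; rewrite (Z.eqb_refl); btauto.
  - subst; rewrite (Z.eqb_refl); btauto.
  - rewrite positions_cons in Ha. rewrite IH; auto.
    + apply andb_true_iff; split; [apply andb_true_iff; split|]; auto; apply Z.ltb_lt; auto.
      apply Ha; left; auto.
    + intros z Hz; apply Ha; right; auto.
Qed.

Lemma stepZ_shift c x d : stepZ c (x + d) = stepZ c x + d.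
Proof. destruct c; simpl; lia. Qed.

Lemma endR_shift x d s : endR (x + d) s = endR x s + d.
Proof.
  revert x; induction s as [|c s IH]; intros x; simpl; auto.
  rewrite stepZ_shift; auto.
Qed.

Lemma stopR_shift a b x d s : stopR (a + d) (b + d) (x + d) s = stopR a b x s.
Proof.
  revert x; induction s as [|c s IH]; intros x; simpl.
  - destruct (Z.eqb_spec x a), (Z.eqb_spec x b), (Z.eqb_spec (x+d) (a+d)), (Z.eqb_spec (x+d) (b+d));
      simpl; auto; lia.
  - rewrite stepZ_shift, IH.
    destruct (Z.ltb_spec a x), (Z.ltb_spec x b), (Z.ltb_spec (a+d) (x+d)), (Z.ltb_spec (x+d) (b+d));
      simpl; auto; lia.
Qed.

Lemma ivt x s z y : In z (positions x s) -> (x <= y <= z \/ z <= y <= x) ->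
  In y (positions x s).
Proof.
  revert x; induction s as [|c s IH]; intros x Hz Hy.
  - simpl in *. destruct Hz as [->|[]]. left; lia.
  - rewrite positions_cons in *. destruct Hz as [->|Hz].
    + left; lia.
    + destruct (Z.eq_dec y x) as [->|Hne]; [left; auto|]. right.
      apply (IH _ Hz). destruct c; simpl; lia.
Qed.

Lemma ivt2 x s z w y : In z (positions x s) -> In w (positions x s) -> z <= y <= w ->
  In y (positions x s).
Proof.
  intros Hz Hw Hy. destruct (Z.le_gt_cases y x).
  - apply (ivt x s z); auto; lia.
  - apply (ivt x s w); auto; lia.
Qed.

Lemma cnt_up (f : nat -> bool) n lo hi : (forall y, f y = true -> lo <= y <= hi)%nat ->
  (length (filter f (seq 0 n)) <= Nat.min n (hi+1) - lo)%nat.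
Proof.
  intros Hf; induction n as [|n IH]; [simpl; lia|].
  rewrite seq_S, filter_app, length_app.
  set (m := Nat.min (S n) (hi + 1)). assert (Hm : m = Nat.min (S n) (hi + 1)) by reflexivity.
  clearbody m. simpl.
  destruct (f n) eqn:E; simpl.
  - specialize (Hf _ E). lia.
  - lia.
Qed.

Lemma cnt_low (f : nat -> bool) n lo hi : (forall y, lo <= y <= hi -> f y = true)%nat ->
  (Nat.min n (hi+1) - lo <= length (filter f (seq 0 n)))%nat.
Proof.
  intros Hf; induction n as [|n IH]; [simpl; lia|].
  rewrite seq_S, filter_app, length_app.
  set (m := Nat.min (S n) (hi + 1)). assert (Hm : m = Nat.min (S n) (hi + 1)) by reflexivity.
  clearbody m. simpl.
  destruct (f n) eqn:E; simpl.
  - lia.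
  - assert (~ (lo <= n <= hi)%nat) by (intro H; rewrite Hf in E; auto; discriminate). lia.
Qed.

Lemma visits_In y ps : visits y ps = true <-> In y ps.
Proof.
  unfold visits. rewrite existsb_exists. split.
  - intros [z [Hz E]]. apply Z.eqb_eq in E; subst; auto.
  - intros H; exists y; split; auto; apply Z.eqb_refl.
Qed.

Lemma range_up N x s lo hi : (hi <= N)%nat ->
  (forall z, In z (positions x s) -> Z.of_nat lo <= z <= Z.of_nat hi) ->
  (range N x s <= hi + 1 - lo)%nat.
Proof.
  intros HN H. unfold range.
  eapply Nat.le_trans; [apply (cnt_up _ _ lo hi)|].
  - intros y Hy. apply visits_In in Hy. apply H in Hy. lia.
  - lia.
Qed.

Lemma range_low N x s lo hi : (lo <= hi <= N)%nat ->
  (forall y, Z.of_nat lo <= y <= Z.of_nat hi -> In y (positions x s)) ->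
  (hi + 1 - lo <= range N x s)%nat.
Proof.
  intros HN H. unfold range.
  eapply Nat.le_trans; [|apply (cnt_low _ _ lo hi)].
  - lia.
  - intros y Hy. apply visits_In. apply H. lia.
Qed.

Lemma in_head x s : In x (positions x s).
Proof. destruct s; simpl; auto. Qed.

Definition topb (N k x : nat) s : bool :=
  if (N - k <=? x)%nat then
    stopR 0 (Z.of_nat k) (Z.of_nat (x - (N - k))) s &&
    (endR (Z.of_nat (x - (N - k))) s =? Z.of_nat k)
  else false.

Definition botb (k x : nat) s : bool :=
  if (x <=? k)%nat then
    stopR 0 (Z.of_nat k) (Z.of_nat x) s && (endR (Z.of_nat x) s =? 0)
  else false.

Lemma top_shift N k x s : (k <= N)%nat -> (N - k <= x)%nat ->
  stopR 0 (Z.of_nat k) (Z.of_nat (x - (N - k))) s = stopR (Z.of_nat N - Z.of_nat k) (Z.of_nat N) (Z.of_nat x) s /\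
  endR (Z.of_nat (x - (N - k))) s = endR (Z.of_nat x) s - (Z.of_nat N - Z.of_nat k).
Proof.
  intros Hk Hx. set (d := Z.of_nat N - Z.of_nat k).
  assert (Ex : Z.of_nat x = Z.of_nat (x - (N - k)) + d) by (unfold d; lia).
  rewrite Ex. split.
  - rewrite <- (stopR_shift 0 (Z.of_nat k) _ d). f_equal; unfold d; lia.
  - rewrite endR_shift; lia.
Qed.

Lemma perx N k x s : (1 <= k <= N)%nat -> (x <= N)%nat ->
  (stopR 0 (Z.of_nat N) (Z.of_nat x) s && (range N (Z.of_nat x) s <=? k)%nat)%bool
  = (topb N k x s || botb k x s)%bool /\ (topb N k x s && botb k x s)%bool = false.
Proof.
  intros Hk Hx. set (ps := positions (Z.of_nat x) s).
  assert (Htop : topb N k x s = true -> stopR 0 (Z.of_nat N) (Z.of_nat x) s = true /\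
            endR (Z.of_nat x) s = Z.of_nat N /\ (range N (Z.of_nat x) s <= k)%nat).
  { unfold topb. destruct (Nat.leb_spec (N - k) x) as [Hg|]; [|discriminate].
    intros H; bdes. destruct (top_shift N k x s) as [E1 E2]; try lia.
    rewrite E1 in H. rewrite E2 in H0.
    assert (He : endR (Z.of_nat x) s = Z.of_nat N) by lia.
    split; [|split]; auto.
    - eapply widen_top; eauto; lia.
    - assert (Hb := stopR_top (Z.of_nat N - Z.of_nat k) (Z.of_nat N) _ _ ltac:(lia) H He).
      eapply Nat.le_trans; [apply (range_up N _ s (N - k + 1) N)|]; try lia.
      intros z Hz; apply Hb in Hz; lia. }
  assert (Hbot : botb k x s = true -> stopR 0 (Z.of_nat N) (Z.of_nat x) s = true /\
            endR (Z.of_nat x) s = 0 /\ (range N (Z.of_nat x) s <= k)%nat).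
  { unfold botb. destruct (Nat.leb_spec x k) as [Hg|]; [|discriminate].
    intros H; bdes. split; [|split]; auto.
    - eapply widen_bot; eauto; lia.
    - assert (Hb := stopR_bot 0 (Z.of_nat k) _ _ ltac:(lia) H H0).
      eapply Nat.le_trans; [apply (range_up N _ s 0 (k - 1))|]; try lia.
      intros z Hz; apply Hb in Hz; lia. }
  split.
  - apply eq_true_iff_eq. split.
    + intros H; bdes. apply Nat.leb_le in H0.
      assert (Hbd := stopR_bounds 0 (Z.of_nat N) _ _ ltac:(lia) H).
      destruct (stopR_end _ _ _ _ H) as [He|He].
      *
        assert (Hall : forall z, In z (positions (Z.of_nat x) s) -> z < Z.of_nat k).
        { intros z Hz. destruct (Z.lt_ge_cases z (Z.of_nat k)) as [|Hge]; auto.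
          exfalso. assert (Hz' := Hbd _ Hz).
          assert (HR := range_low N (Z.of_nat x) s 0 (Z.to_nat z) ltac:(lia)).
          assert ((Z.to_nat z + 1 - 0 <= range N (Z.of_nat x) s)%nat).
          { apply HR. intros y Hy. apply (ivt2 _ _ (endR (Z.of_nat x) s) z); auto.
            apply end_in. lia. }
          lia. }
        apply orb_true_iff; right. unfold botb.
        assert (Hxk := Hall _ (in_head _ _)).
        destruct (Nat.leb_spec x k); [|lia].
        apply andb_true_iff; split; [|apply Z.eqb_eq; auto].
        eapply narrow_bot; eauto.
      * assert (Hall : forall z, In z (positions (Z.of_nat x) s) -> Z.of_nat N - Z.of_nat k < z).
        { intros z Hz. destruct (Z.lt_ge_cases (Z.of_nat N - Z.of_nat k) z) as [|Hge]; auto.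
          exfalso. assert (Hz' := Hbd _ Hz).
          assert (HR := range_low N (Z.of_nat x) s (Z.to_nat z) N ltac:(lia)).
          assert ((N + 1 - Z.to_nat z <= range N (Z.of_nat x) s)%nat).
          { apply HR. intros y Hy. apply (ivt2 _ _ z (endR (Z.of_nat x) s)); auto.
            apply end_in. lia. }
          lia. }
        apply orb_true_iff; left. unfold topb.
        assert (Hxk := Hall _ (in_head _ _)).
        destruct (Nat.leb_spec (N - k) x); [|lia].
        destruct (top_shift N k x s) as [E1 E2]; try lia.
        rewrite E1, E2.
        apply andb_true_iff; split; [|apply Z.eqb_eq; lia].
        eapply narrow_top; eauto.
    + intros H. apply orb_true_iff in H. destruct H as [H|H].
      * destruct (Htop H) as [A [B C]]. rewrite A. apply Nat.leb_le in C. rewrite C. auto.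
      * destruct (Hbot H) as [A [B C]]. rewrite A. apply Nat.leb_le in C. rewrite C. auto.
  - destruct (topb N k x s) eqn:E1; auto. destruct (botb k x s) eqn:E2; auto.
    destruct (Htop eq_refl) as [_ [A _]]. destruct (Hbot eq_refl) as [_ [B _]]. lia.
Qed.

Open Scope R_scope.

Lemma rsum_app l1 l2 : rsum (l1 ++ l2) = rsum l1 + rsum l2.
Proof. induction l1; simpl; [ring|rewrite IHl1; ring]. Qed.

Lemma rsum_map_plus {A} (f g : A -> R) l :
  rsum (map (fun x => f x + g x) l) = rsum (map f l) + rsum (map g l).
Proof. induction l; simpl; [ring|rewrite IHl; ring]. Qed.

Lemma rsum_map_scal {A} c (f : A -> R) l :
  rsum (map (fun x => c * f x) l) = c * rsum (map f l).
Proof. induction l; simpl; [ring|rewrite IHl; ring]. Qed.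

Lemma rsum_map_ext {A} (f g : A -> R) l : (forall x, In x l -> f x = g x) ->
  rsum (map f l) = rsum (map g l).
Proof. intros H; rewrite (map_ext_in f g l H); auto. Qed.

Lemma rsum_map_zero {A} (f : A -> R) l : (forall x, In x l -> f x = 0) ->
  rsum (map f l) = 0.
Proof. induction l; simpl; intros H; [auto|]. rewrite H, IHl; auto. ring. Qed.

Lemma rsum_swap {A B} (f : A -> B -> R) l1 l2 :
  rsum (map (fun x => rsum (map (f x) l2)) l1) =
  rsum (map (fun y => rsum (map (fun x => f x y) l1)) l2).
Proof.
  induction l1; simpl.
  - rewrite rsum_map_zero; auto.
  - rewrite IHl1. rewrite <- rsum_map_plus. reflexivity.
Qed.

Lemma rsum_flat f l :
  rsum (map f (flat_map (fun s : list bool => [true :: s; false :: s]) l)) =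
  rsum (map (fun s => f (true :: s) + f (false :: s)) l).
Proof. induction l; simpl; [auto|]. rewrite IHl; ring. Qed.

Lemma rsum_BL_S f n :
  rsum (map f (bool_lists (S n))) = rsum (map (fun s => f (true :: s) + f (false :: s)) (bool_lists n)).
Proof. apply rsum_flat. Qed.

Lemma seq_shift_gen d n a : seq (a + d) n = map (fun y => (y + d)%nat) (seq a n).
Proof.
  revert a; induction n; intros a; simpl; auto.
  f_equal. rewrite <- IHn. f_equal.
Qed.

Lemma reindex1 (f : nat -> R) N k : (k <= N)%nat -> (forall x, (k < x)%nat -> f x = 0) ->
  rsum (map f (seq 0 (N + 1))) = rsum (map f (seq 0 (k + 1))).
Proof.
  intros Hk Hf. replace (N + 1)%nat with ((k + 1) + (N - k))%nat by lia.
  rewrite seq_app, map_app, rsum_app.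
  rewrite (rsum_map_zero _ (seq (0 + (k + 1)) (N - k))); [ring|].
  intros x Hx. apply in_seq in Hx. apply Hf. lia.
Qed.

Lemma reindex2 (f : nat -> R) N k : (k <= N)%nat -> (forall x, (x < N - k)%nat -> f x = 0) ->
  rsum (map f (seq 0 (N + 1))) = rsum (map (fun y => f (y + (N - k))%nat) (seq 0 (k + 1))).
Proof.
  intros Hk Hf. replace (N + 1)%nat with ((N - k) + (k + 1))%nat by lia.
  rewrite seq_app, map_app, rsum_app.
  rewrite (rsum_map_zero _ (seq 0 (N - k))).
  2:{ intros x Hx. apply in_seq in Hx. apply Hf. lia. }
  replace (0 + (N - k))%nat with (0 + (N - k))%nat by reflexivity.
  rewrite seq_shift_gen, map_map. ring.
Qed.

Lemma ind_or (b b1 b2 : bool) (c : R) : b = (b1 || b2)%bool -> (b1 && b2)%bool = false ->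
  (if b then c else 0) = (if b1 then c else 0) + (if b2 then c else 0).
Proof. intros -> H; destruct b1, b2; simpl in *; try discriminate; ring. Qed.

Lemma pers N k s c : (1 <= k <= N)%nat ->
  rsum (map (fun x : nat => if (stopR 0 (Z.of_nat N) (Z.of_nat x) s && (range N (Z.of_nat x) s <=? k)%nat)%bool then c else 0) (seq 0 (N + 1)))
  = rsum (map (fun y : nat => if stopR 0 (Z.of_nat k) (Z.of_nat y) s then c else 0) (seq 0 (k + 1))).
Proof.
  intros Hk.
  rewrite (rsum_map_ext _ (fun x => (if topb N k x s then c else 0) + (if botb k x s then c else 0))).
  2:{ intros x Hx. apply in_seq in Hx. destruct (perx N k x s) as [E1 E2]; try lia.
      apply ind_or; auto. }
  rewrite rsum_map_plus.
  rewrite (reindex2 (fun x => if topb N k x s then c else 0) N k); [|lia|].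
  2:{ intros x Hx. unfold topb. destruct (Nat.leb_spec (N - k) x); [lia|auto]. }
  rewrite (reindex1 (fun x => if botb k x s then c else 0) N k); [|lia|].
  2:{ intros x Hx. unfold botb. destruct (Nat.leb_spec x k); [lia|auto]. }
  rewrite <- rsum_map_plus. apply rsum_map_ext. intros y Hy.
  unfold topb, botb.
  destruct (Nat.leb_spec (N - k) (y + (N - k))); [|lia].
  replace (y + (N - k) - (N - k))%nat with y by lia.
  apply in_seq in Hy.
  destruct (Nat.leb_spec y k); [|lia].
  destruct (stopR 0 (Z.of_nat k) (Z.of_nat y) s) eqn:E; simpl; [|ring].
  destruct (stopR_end _ _ _ _ E) as [He|He]; rewrite He.
  - rewrite Z.eqb_refl. destruct (Z.eqb_spec 0 (Z.of_nat k)); [lia|]. ring.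
  - rewrite Z.eqb_refl. destruct (Z.eqb_spec (Z.of_nat k) 0); [lia|]. ring.
Qed.

Definition Pn (p : R) (K : Z) (n : nat) (y : Z) : R :=
  rsum (map (fun s => if stopR 0 K y s then path_weight p s else 0) (bool_lists n)).
Definition Sn (p : R) (K : Z) (n : nat) (y : Z) : R :=
  rsum (map (fun s => if aliveR 0 K y s then path_weight p s else 0) (bool_lists n)).

Lemma Pn_0 p K y : Pn p K 0 y = if ((y =? 0)%Z || (y =? K)%Z)%bool then 1 else 0.
Proof. unfold Pn; simpl. destruct (_ || _)%bool; ring. Qed.

Lemma Sn_0 p K y : Sn p K 0 y = if ((0 <? y)%Z && (y <? K)%Z)%bool then 1 else 0.
Proof. unfold Sn; simpl. destruct ((0 <? y)%Z && (y <? K)%Z)%bool; simpl; ring. Qed.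

Lemma Pn_S p K n y : Pn p K (S n) y =
  if ((0 <? y)%Z && (y <? K)%Z)%bool then p * Pn p K n (y + 1) + (1 - p) * Pn p K n (y - 1) else 0.
Proof.
  unfold Pn. rewrite rsum_BL_S. cbn [stopR path_weight fold_right stepZ].
  destruct ((0 <? y)%Z && (y <? K)%Z)%bool; simpl.
  - rewrite <- !rsum_map_scal, <- rsum_map_plus. apply rsum_map_ext; intros s _.
    fold (path_weight p s).
    destruct (stopR 0 K (y + 1) s), (stopR 0 K (y - 1) s); ring.
  - apply rsum_map_zero; intros; ring.
Qed.

Lemma Sn_S p K n y : Sn p K (S n) y =
  if ((0 <? y)%Z && (y <? K)%Z)%bool then p * Sn p K n (y + 1) + (1 - p) * Sn p K n (y - 1) else 0.
Proof.
  unfold Sn. rewrite rsum_BL_S. cbn [aliveR path_weight fold_right stepZ].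
  destruct ((0 <? y)%Z && (y <? K)%Z)%bool; simpl.
  - rewrite <- !rsum_map_scal, <- rsum_map_plus. apply rsum_map_ext; intros s _.
    fold (path_weight p s).
    destruct (aliveR 0 K (y + 1) s), (aliveR 0 K (y - 1) s); ring.
  - apply rsum_map_zero; intros; ring.
Qed.

Lemma sum_shift f M : sum_f_R0 f (S M) = f 0%nat + sum_f_R0 (fun i => f (S i)) M.
Proof.
  induction M; simpl; [ring|]. simpl in IHM. rewrite IHM. ring.
Qed.

Lemma sum_ext f g M : (forall i, f i = g i) -> sum_f_R0 f M = sum_f_R0 g M.
Proof. intros H; induction M; simpl; rewrite ?IHM, ?H; auto. Qed.

Lemma sum_lin a b f g M :
  sum_f_R0 (fun i => a * f i + b * g i) M = a * sum_f_R0 f M + b * sum_f_R0 g M.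
Proof. induction M; simpl; [ring|rewrite IHM; ring]. Qed.

Lemma sum_zero M : sum_f_R0 (fun _ => 0) M = 0.
Proof. induction M; simpl; [ring|rewrite IHM; ring]. Qed.

Section Analysis.
Variable p : R.
Variable K : Z.
Hypothesis Hp : / 2 <= p <= 1.
Hypothesis HK : (0 < K)%Z.

Lemma PS_one M : forall y, (0 <= y <= K)%Z ->
  sum_f_R0 (fun i => Pn p K i y) M + Sn p K M y = 1.
Proof.
  induction M as [|M IH]; intros y Hy.
  - simpl. rewrite Pn_0, Sn_0.
    destruct (Z.eqb_spec y 0), (Z.eqb_spec y K), (Z.ltb_spec 0 y), (Z.ltb_spec y K); simpl;
      try lra; lia.
  - rewrite sum_shift, Pn_0, Sn_S.
    destruct (Z.ltb_spec 0 y), (Z.ltb_spec y K); simpl.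
    + destruct (Z.eqb_spec y 0), (Z.eqb_spec y K); try lia. simpl.
      rewrite (sum_ext _ (fun i => p * Pn p K i (y + 1) + (1 - p) * Pn p K i (y - 1))).
      2:{ intros i. rewrite Pn_S. destruct (Z.ltb_spec 0 y), (Z.ltb_spec y K); simpl; auto; lia. }
      rewrite sum_lin.
      assert (A := IH (y + 1)%Z ltac:(lia)). assert (B := IH (y - 1)%Z ltac:(lia)).
      nra.
    + assert (E : ((y =? 0)%Z || (y =? K)%Z)%bool = true).
      { apply orb_true_iff. destruct (Z.eqb_spec y K); auto. lia. }
      rewrite E.
      rewrite (sum_ext _ (fun _ => 0)); [rewrite sum_zero; ring|].
      intros i; rewrite Pn_S. destruct (Z.ltb_spec 0 y), (Z.ltb_spec y K); simpl; auto; lia.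
    + assert (E : ((y =? 0)%Z || (y =? K)%Z)%bool = true).
      { apply orb_true_iff. destruct (Z.eqb_spec y 0); auto. lia. }
      rewrite E.
      rewrite (sum_ext _ (fun _ => 0)); [rewrite sum_zero; ring|].
      intros i; rewrite Pn_S. destruct (Z.ltb_spec 0 y), (Z.ltb_spec y K); simpl; auto; lia.
    + lia.
Qed.

Lemma nonneg n : forall y, 0 <= Pn p K n y /\ 0 <= Sn p K n y.
Proof.
  induction n as [|n IH]; intros y.
  - rewrite Pn_0, Sn_0. split; destruct (_ : bool); lra.
  - rewrite Pn_S, Sn_S. destruct (_ : bool); [|lra].
    destruct (IH (y + 1)%Z), (IH (y - 1)%Z). split; nra.
Qed.

Definition uf (y : Z) : R := 2 * IZR K * (IZR K - IZR y) + 2 * IZR y * (IZR K - IZR y).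

Lemma Ssum_bound M : forall y, (0 <= y <= K)%Z -> sum_f_R0 (fun i => Sn p K i y) M <= uf y.
Proof.
  assert (HK1 : 1 <= IZR K) by (apply IZR_le; lia).
  induction M as [|M IH]; intros y Hy.
  - simpl. rewrite Sn_0. unfold uf.
    assert (0 <= IZR y) by (apply IZR_le; lia).
    assert (IZR y <= IZR K) by (apply IZR_le; lia).
    destruct (Z.ltb_spec 0 y), (Z.ltb_spec y K); simpl; try nra.
    assert (IZR y + 1 <= IZR K) by (rewrite <- plus_IZR; apply IZR_le; lia). nra.
  - rewrite sum_shift, Sn_0.
    destruct (Z.ltb_spec 0 y), (Z.ltb_spec y K); simpl.
    + rewrite (sum_ext _ (fun i => p * Sn p K i (y + 1) + (1 - p) * Sn p K i (y - 1))).
      2:{ intros i. rewrite Sn_S. destruct (Z.ltb_spec 0 y), (Z.ltb_spec y K); simpl; auto; lia. }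
      rewrite sum_lin.
      assert (A := IH (y + 1)%Z ltac:(lia)). assert (B := IH (y - 1)%Z ltac:(lia)).
      assert (A' : p * sum_f_R0 (fun i => Sn p K i (y + 1)) M <= p * uf (y + 1)) by (apply Rmult_le_compat_l; lra).
      assert (B' : (1 - p) * sum_f_R0 (fun i => Sn p K i (y - 1)) M <= (1 - p) * uf (y - 1)) by (apply Rmult_le_compat_l; lra).
      assert (C : 1 + p * uf (y + 1) + (1 - p) * uf (y - 1) <= uf y).
      { unfold uf. rewrite plus_IZR, minus_IZR.
        assert (0 <= IZR y * (2 * p - 1)).
        { apply Rmult_le_pos; [apply IZR_le; lia|lra]. }
        nra. }
      lra.
    + rewrite (sum_ext _ (fun _ => 0)); [rewrite sum_zero|].
      * unfold uf. assert (0 <= IZR y) by (apply IZR_le; lia).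
        assert (IZR y <= IZR K) by (apply IZR_le; lia). nra.
      * intros i; rewrite Sn_S. destruct (Z.ltb_spec 0 y), (Z.ltb_spec y K); simpl; auto; lia.
    + rewrite (sum_ext _ (fun _ => 0)); [rewrite sum_zero|].
      * unfold uf. assert (0 <= IZR y) by (apply IZR_le; lia).
        assert (IZR y <= IZR K) by (apply IZR_le; lia). nra.
      * intros i; rewrite Sn_S. destruct (Z.ltb_spec 0 y), (Z.ltb_spec y K); simpl; auto; lia.
    + lia.
Qed.

Lemma S_mono M y : (0 <= y <= K)%Z -> Sn p K (S M) y <= Sn p K M y.
Proof.
  intros Hy. assert (A := PS_one M y Hy). assert (B := PS_one (S M) y Hy).
  simpl in B. destruct (nonneg (S M) y). lra.
Qed.

Lemma S_lin M y : (0 <= y <= K)%Z -> INR (S M) * Sn p K M y <= sum_f_R0 (fun i => Sn p K i y) M.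
Proof.
  intros Hy. induction M as [|M IH].
  - simpl. lra.
  - simpl sum_f_R0. rewrite S_INR. assert (A := S_mono M y Hy).
    assert (0 <= INR (S M)) by apply pos_INR. nra.
Qed.

Lemma P_sum y : (0 <= y <= K)%Z -> infinite_sum (fun i => Pn p K i y) 1.
Proof.
  intros Hy eps Heps.
  assert (Hu : 0 <= uf y).
  { assert (A := Ssum_bound 0 y Hy). simpl in A. destruct (nonneg 0 y). lra. }
  destruct (archimed (uf y / eps)) as [H1 _].
  exists (Z.to_nat (up (uf y / eps))). intros n Hn.
  assert (Hup : (0 <= up (uf y / eps))%Z).
  { apply le_IZR. assert (0 <= uf y / eps) by (unfold Rdiv; apply Rmult_le_pos; [lra|left; apply Rinv_0_lt_compat; lra]). lra. }
  assert (HN : IZR (up (uf y / eps)) <= INR n).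
  { rewrite <- (Z2Nat.id _ Hup), <- INR_IZR_INZ. apply le_INR; lia. }
  assert (A := PS_one n y Hy). assert (B := S_lin n y Hy). assert (C := Ssum_bound n y Hy).
  destruct (nonneg n y) as [_ D].
  unfold R_dist. replace (sum_f_R0 (fun i => Pn p K i y) n - 1) with (- Sn p K n y) by lra.
  rewrite Rabs_Ropp, Rabs_pos_eq by lra.
  rewrite S_INR in B.
  assert (E : uf y < eps * (INR n + 1)).
  { assert (uf y / eps * eps = uf y) by (field; lra). nra. }
  nra.
Qed.

End Analysis.

Lemma Un_cv_ext u v l : (forall n, u n = v n) -> Un_cv u l -> Un_cv v l.
Proof. intros H Hu eps He. destruct (Hu eps He) as [N HN]. exists N; intros n Hn; rewrite <- H; auto. Qed.

Lemma sum_plus2 f g M : sum_f_R0 (fun i => f i + g i) M = sum_f_R0 f M + sum_f_R0 g M.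
Proof. induction M; simpl; [ring|rewrite IHM; ring]. Qed.

Lemma sum_scal2 c f M : sum_f_R0 (fun i => c * f i) M = c * sum_f_R0 f M.
Proof. induction M; simpl; [ring|rewrite IHM; ring]. Qed.

Lemma inf_plus f g a b : infinite_sum f a -> infinite_sum g b ->
  infinite_sum (fun n => f n + g n) (a + b).
Proof.
  intros Hf Hg. change (Un_cv (fun M => sum_f_R0 (fun n => f n + g n) M) (a + b)).
  apply (Un_cv_ext (fun M => sum_f_R0 f M + sum_f_R0 g M)).
  - intros; rewrite sum_plus2; auto.
  - apply CV_plus; auto.
Qed.

Lemma inf_scal c f a : infinite_sum f a -> infinite_sum (fun n => c * f n) (c * a).
Proof.
  intros Hf. change (Un_cv (fun M => sum_f_R0 (fun n => c * f n) M) (c * a)).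
  apply (Un_cv_ext (fun M => (fun _ => c) M * sum_f_R0 f M)).
  - intros; rewrite sum_scal2; auto.
  - apply CV_mult; auto. intros eps He; exists 0%nat; intros; unfold R_dist.
    rewrite Rminus_diag, Rabs_R0; lra.
Qed.

Lemma inf_ext f g a : (forall n, f n = g n) -> infinite_sum f a -> infinite_sum g a.
Proof.
  intros H Hf. change (Un_cv (fun M => sum_f_R0 g M) a).
  apply (Un_cv_ext (fun M => sum_f_R0 f M)); auto. intros; apply sum_ext; auto.
Qed.

Lemma inf_zero : infinite_sum (fun _ => 0) 0.
Proof.
  intros eps He; exists 0%nat; intros n _. unfold R_dist. rewrite sum_zero, Rminus_diag, Rabs_R0; lra.
Qed.

Lemma inf_list {A} (f : A -> nat -> R) (l : A -> R) L :
  (forall y, In y L -> infinite_sum (f y) (l y)) ->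
  infinite_sum (fun n => rsum (map (fun y => f y n) L)) (rsum (map l L)).
Proof.
  induction L as [|a L IH]; intros H; simpl.
  - apply inf_zero.
  - apply inf_plus; [apply H; left; auto|apply IH; intros; apply H; right; auto].
Qed.

Lemma rsum_ones {A} (l : list A) : rsum (map (fun _ => 1) l) = INR (length l).
Proof. induction l; [reflexivity|].
  change (1 + rsum (map (fun _ => 1) l) = INR (S (length l))). rewrite IHl, S_INR. ring. Qed.

Lemma cdf_eq (p : nat -> R) N k t n : (1 <= k <= N)%nat ->
  (forall x s, (x <= N)%nat -> stopR 0 (Z.of_nat N) (Z.of_nat x) s = true ->
     (if Rle_dec (INR (range N (Z.of_nat x) s) / INR N) t then 1 else 0) =
     (if (range N (Z.of_nat x) s <=? k)%nat then 1 else 0)) ->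
  cdf_term p N t n = / INR (N + 1) *
    rsum (map (fun y : nat => Pn (p N) (Z.of_nat k) n (Z.of_nat y)) (seq 0 (k + 1))).
Proof.
  intros Hk Hind. unfold cdf_term. rewrite rsum_map_scal. f_equal.
  set (F := fun (x : nat) (s : list bool) =>
     if (stopR 0 (Z.of_nat N) (Z.of_nat x) s && (range N (Z.of_nat x) s <=? k)%nat)%bool
     then path_weight (p N) s else 0).
  set (G := fun (y : nat) (s : list bool) =>
     if stopR 0 (Z.of_nat k) (Z.of_nat y) s then path_weight (p N) s else 0).
  transitivity (rsum (map (fun x => rsum (map (F x) (bool_lists n))) (seq 0 (N + 1)))).
  { apply rsum_map_ext. intros x Hx. apply in_seq in Hx. apply rsum_map_ext. intros s _.
    unfold F. rewrite stoppedb_stopR.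
    destruct (stopR 0 (Z.of_nat N) (Z.of_nat x) s) eqn:E; simpl; [|ring].
    rewrite Hind; auto; [|lia]. destruct (_ <=? _)%nat; ring. }
  rewrite rsum_swap.
  transitivity (rsum (map (fun s => rsum (map (fun y => G y s) (seq 0 (k + 1)))) (bool_lists n))).
  { apply rsum_map_ext. intros s _. unfold F, G. apply pers. lia. }
  rewrite <- rsum_swap. reflexivity.
Qed.

Lemma main_sum (p : nat -> R) N k t : (1 <= k <= N)%nat -> / 2 <= p N <= 1 ->
  (forall x s, (x <= N)%nat -> stopR 0 (Z.of_nat N) (Z.of_nat x) s = true ->
     (if Rle_dec (INR (range N (Z.of_nat x) s) / INR N) t then 1 else 0) =
     (if (range N (Z.of_nat x) s <=? k)%nat then 1 else 0)) ->
  infinite_sum (cdf_term p N t) (/ INR (N + 1) * INR (k + 1)).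
Proof.
  intros Hk Hp Hind.
  apply (inf_ext (fun n => / INR (N + 1) *
    rsum (map (fun y : nat => Pn (p N) (Z.of_nat k) n (Z.of_nat y)) (seq 0 (k + 1))))).
  { intros n; symmetry; apply cdf_eq; auto. }
  apply inf_scal.
  replace (INR (k + 1)) with (rsum (map (fun _ : nat => 1) (seq 0 (k + 1))))
    by (rewrite rsum_ones, length_seq; auto).
  apply (inf_list (fun y n => Pn (p N) (Z.of_nat k) n (Z.of_nat y)) (fun _ => 1)).
  intros y Hy. apply in_seq in Hy. apply P_sum; auto; lia.
Qed.

Lemma range_stop N x s : (1 <= N)%nat -> stopR 0 (Z.of_nat N) x s = true -> (range N x s <= N)%nat.
Proof.
  intros HN H. destruct (stopR_end _ _ _ _ H) as [He|He].
  - assert (Hb := stopR_bot 0 (Z.of_nat N) _ _ ltac:(lia) H He).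
    eapply Nat.le_trans; [apply (range_up N _ s 0 (N - 1))|]; try lia.
    intros z Hz; apply Hb in Hz; lia.
  - assert (Hb := stopR_top 0 (Z.of_nat N) _ _ ltac:(lia) H He).
    eapply Nat.le_trans; [apply (range_up N _ s 1 N)|]; try lia.
    intros z Hz; apply Hb in Hz; lia.
Qed.

Lemma range_pos N x s : (x <= N)%nat -> (1 <= range N (Z.of_nat x) s)%nat.
Proof.
  intros Hx. eapply Nat.le_trans; [|apply (range_low N _ s x x)]; try lia.
  intros y Hy. replace y with (Z.of_nat x) by lia. apply in_head.
Qed.

Definition kk (t : R) (N : nat) : nat := Nat.min N (Z.to_nat (Int_part (t * INR N))).

Lemma Int_part_nonneg r : 0 <= r -> (0 <= Int_part r)%Z.
Proof.
  intros H. destruct (base_Int_part r) as [A B].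
  assert (IZR (Int_part r) > -1) by lra. apply lt_IZR in H0. lia.
Qed.

Lemma ind_conv N t r : (1 <= N)%nat -> 0 < t -> (r <= N)%nat ->
  (if Rle_dec (INR r / INR N) t then 1 else 0) = (if (r <=? kk t N)%nat then 1 else 0).
Proof.
  intros HN Ht Hr. unfold kk.
  assert (HNpos : 0 < INR N) by (apply lt_0_INR; lia).
  assert (Hz := Int_part_nonneg (t * INR N) ltac:(nra)).
  destruct (base_Int_part (t * INR N)) as [A B].
  set (z := Int_part (t * INR N)) in *.
  assert (Ez : INR (Z.to_nat z) = IZR z) by (rewrite INR_IZR_INZ, Z2Nat.id; auto).
  assert (Ediv : INR r / INR N * INR N = INR r) by (field; lra).
  destruct (Rle_dec (INR r / INR N) t) as [H|H];
  destruct (Nat.leb_spec r (Nat.min N (Z.to_nat z))) as [H'|H']; auto.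
  - exfalso. assert (Hrz : (Z.to_nat z + 1 <= r)%nat) by lia.
    apply le_INR in Hrz. rewrite plus_INR, Ez in Hrz. simpl in Hrz.
    assert (INR r <= t * INR N) by nra. lra.
  - exfalso. apply H. assert (Hrz : (r <= Z.to_nat z)%nat) by lia.
    apply le_INR in Hrz. rewrite Ez in Hrz.
    apply (Rmult_le_reg_r (INR N)); auto. rewrite Ediv. lra.
Qed.

Lemma regime_bound p :
  symmetric_regime p \/ weakly_asymmetric_regime p \/ asymmetric_regime p ->
  exists Nr, forall N, (Nr <= N)%nat -> / 2 <= p N <= 1.
Proof.
  intros [H|[H|H]].
  - exists 0%nat; intros N _; rewrite H; lra.
  - destruct H as [c [Hc [N0 HN0]]].
    destruct (archimed (2 * c)) as [H1 _].
    assert (Hup : (0 <= up (2 * c))%Z) by (apply le_IZR; lra).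
    exists (Nat.max N0 (Z.to_nat (up (2 * c)))). intros N HN.
    rewrite HN0 by lia.
    assert (HNr : IZR (up (2 * c)) <= INR N).
    { rewrite <- (Z2Nat.id _ Hup), <- INR_IZR_INZ. apply le_INR; lia. }
    assert (0 < INR N) by lra.
    assert (E : c / INR N * INR N = c) by (field; lra).
    split.
    + assert (0 < c / INR N) by (unfold Rdiv; apply Rmult_lt_0_compat; [lra|apply Rinv_0_lt_compat; lra]). lra.
    + assert (c / INR N <= / 2) by nra. lra.
  - destruct H as [p0 [Hp0 E]]. exists 0%nat; intros N _; rewrite E; lra.
Qed.

Lemma limit_kk t : 0 < t ->
  Un_cv (fun N => / INR (N + 1) * INR (kk t N + 1)) (uniform_cdf t).
Proof.
  intros Ht eps Heps.
  destruct (archimed (/ eps)) as [H1 _].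
  assert (Hup : (0 <= up (/ eps))%Z).
  { apply le_IZR. assert (0 < / eps) by (apply Rinv_0_lt_compat; lra). lra. }
  exists (S (Z.to_nat (up (/ eps)))). intros N HN.
  assert (HNr : IZR (up (/ eps)) <= INR N).
  { rewrite <- (Z2Nat.id _ Hup), <- INR_IZR_INZ. apply le_INR; lia. }
  assert (HN1 : 1 <= INR N) by (apply (le_INR 1); lia).
  assert (Hz := Int_part_nonneg (t * INR N) ltac:(nra)).
  destruct (base_Int_part (t * INR N)) as [A B].
  unfold kk. set (z := Int_part (t * INR N)) in *.
  assert (Ez : INR (Z.to_nat z) = IZR z) by (rewrite INR_IZR_INZ, Z2Nat.id; auto).
  assert (HNp : 0 < INR N + 1) by lra.
  destruct (Rle_or_lt 1 t) as [Ht1|Ht1].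
  - assert (Hm : Nat.min N (Z.to_nat z) = N).
    { apply Nat.min_l. apply INR_le. rewrite Ez.
      assert (Hz1 : IZR z > IZR (Z.of_nat N - 1)) by (rewrite minus_IZR, <- INR_IZR_INZ; nra).
      apply lt_IZR in Hz1. rewrite INR_IZR_INZ. apply IZR_le. lia. }
    rewrite Hm. unfold uniform_cdf. rewrite Rmin_right by lra. rewrite Rmax_right by lra.
    unfold R_dist. rewrite !plus_INR. simpl INR.
    replace (/ (INR N + 1) * (INR N + 1) - 1) with 0 by (field; lra).
    rewrite Rabs_R0; lra.
  - assert (Hm : Nat.min N (Z.to_nat z) = Z.to_nat z).
    { apply Nat.min_r. apply INR_le. rewrite Ez. nra. }
    rewrite Hm, !plus_INR, Ez. unfold uniform_cdf. rewrite Rmin_left by lra. rewrite Rmax_right by lra.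
    unfold R_dist. simpl INR.
    replace (/ (INR N + 1) * (IZR z + 1) - t) with ((IZR z - t * INR N + 1 - t) / (INR N + 1))
      by (field; lra).
    unfold Rdiv. rewrite Rabs_mult, (Rabs_pos_eq (/ (INR N + 1))) by (left; apply Rinv_0_lt_compat; lra).
    assert (Habs : Rabs (IZR z - t * INR N + 1 - t) < 1) by (apply Rabs_def1; lra).
    assert (Hinv : / (INR N + 1) < eps).
    { apply (Rmult_lt_reg_r (INR N + 1)); auto. rewrite Rinv_l by lra.
      assert (/ eps * eps = 1) by (field; lra). nra. }
    assert (0 < / (INR N + 1)) by (apply Rinv_0_lt_compat; lra).
    assert (0 <= Rabs (IZR z - t * INR N + 1 - t)) by apply Rabs_pos.
    nra.
Qed.

Theorem proposition2p2 (p : nat -> R)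
  (hp : symmetric_regime p \/ weakly_asymmetric_regime p \/ asymmetric_regime p) :
  forall t : R,
    exists F : nat -> R,
      (exists N1 : nat, forall N : nat, (2 <= N)%nat -> (N1 <= N)%nat ->
         infinite_sum (cdf_term p N t) (F N)) /\
      Un_cv F (uniform_cdf t).
Proof.
  intros t. destruct (Rle_or_lt t 0) as [Ht|Ht].
  - exists (fun _ => 0). split.
    + exists 0%nat. intros N HN _. apply (inf_ext (fun _ => 0)); [|apply inf_zero].
      intros n. unfold cdf_term. symmetry. apply rsum_map_zero. intros x Hx.
      apply in_seq in Hx.
      rewrite (rsum_map_zero _ (bool_lists n)); [ring|]. intros s _.
      destruct (Rle_dec (INR (range N (Z.of_nat x) s) / INR N) t) as [H|H]; [|ring].
      exfalso. assert (Hr := range_pos N x s ltac:(lia)).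
      apply (le_INR 1) in Hr. assert (0 < INR N) by (apply lt_0_INR; lia).
      assert (0 < INR (range N (Z.of_nat x) s) / INR N)
        by (unfold Rdiv; apply Rmult_lt_0_compat; [simpl in Hr; lra|apply Rinv_0_lt_compat; lra]).
      lra.
    + unfold uniform_cdf. rewrite Rmin_left by lra. rewrite Rmax_left by lra.
      intros eps He; exists 0%nat; intros; unfold R_dist; rewrite Rminus_diag, Rabs_R0; lra.
  - destruct (regime_bound p hp) as [Nr HNr].
    destruct (archimed (/ t)) as [H1 _].
    assert (Hup : (0 <= up (/ t))%Z).
    { apply le_IZR. assert (0 < / t) by (apply Rinv_0_lt_compat; lra). lra. }
    exists (fun N => / INR (N + 1) * INR (kk t N + 1)). split; [|apply limit_kk; auto].
    exists (Nat.max Nr (Z.to_nat (up (/ t)))). intros N H2 HN.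
    apply main_sum.
    + split; [|unfold kk; lia].
      assert (HNr' : IZR (up (/ t)) <= INR N).
      { rewrite <- (Z2Nat.id _ Hup), <- INR_IZR_INZ. apply le_INR; lia. }
      assert (Htn : 1 < t * INR N).
      { assert (/ t * t = 1) by (field; lra). nra. }
      destruct (base_Int_part (t * INR N)) as [A B].
      assert (Hz : IZR (Int_part (t * INR N)) > IZR 0) by lra.
      apply lt_IZR in Hz. unfold kk. lia.
    + apply HNr; lia.
    + intros x s Hx Hs. apply ind_conv; auto; [lia|]. apply range_stop; auto; lia.
Qed.
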